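(* Let $G$ be a grid-labelled graph of type $(a,b)$ with at least one edge that is row stratified or column stratified. Then $\rho(G)$ is separable if and only if $G$ satisfies the degree criterion.
   Context: A grid-labelled graph of type $(a,b)$ is a simple graph $G$ whose vertex set is the grid $[a]\times[b]$. If $G$ has $m\ge1$ edges, $\rho(G)=L(G)/(2m)$, where $L(G)$ is the combinatorial Laplacian, viewed as a density matrix on $\mathbb{C}^a\otimes\mathbb{C}^b$ with vertex $(i,j)$ corresponding to $|i\rangle\otimes|j\rangle$; separable means a convex combination of tensor products of density matrices. An edge $\{(i,j),(k,l)\}$ is diagonal if $i\neq k$ and $j\neq l$. $G$ is row stratified if every diagonal edge $\{(i,j),(k,l)\}$ satisfies $|i-k|=1$, and column stratified if every diagonal edge satisfies $|j-l|=1$. The partial transpose $\Gamma(G)$ is the grid-labelled graph with edge set $\{\{(k,j),(i,l)\}:\{(i,j),(k,l)\}\in E(G)\}$; $G$ satisfies the degree criterion if every vertex has the same degree in $G$ and in $\Gamma(G)$. *)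

(* Defs.v *)
From HB Require Import structures.
From mathcomp Require Import all_boot all_order all_algebra.
Set Implicit Arguments. Unset Strict Implicit. Unset Printing Implicit Defensive.
Import Order.TTheory GRing.Theory Num.Theory.
Local Open Scope ring_scope.

Notation gridV a b := ('I_a * 'I_b)%type.

Section Grid.
Variables a b : nat.
Implicit Types (adj : rel (gridV a b)) (u v : gridV a b).

Definition simple_graph adj := symmetric adj /\ irreflexive adj.

Definition edges adj : {set {set gridV a b}} :=
  [set [set u; v] | u in [set: gridV a b], v in [set w | adj u w]].

Definition deg adj u : nat := #|[set v | adj u v]|.

Definition diagonal u v : bool := (u.1 != v.1) && (u.2 != v.2).

Definition row_stratified adj : Prop :=
  forall u v, adj u v -> diagonal u v ->
    (u.1.+1 == v.1 :> nat) || (v.1.+1 == u.1 :> nat).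

Definition col_stratified adj : Prop :=
  forall u v, adj u v -> diagonal u v ->
    (u.2.+1 == v.2 :> nat) || (v.2.+1 == u.2 :> nat).

(* partial transpose: {(i,j),(k,l)} in E(G) gives {(k,j),(i,l)} in E(Γ G) *)
Definition ptrans adj : rel (gridV a b) :=
  fun x y => adj (y.1, x.2) (x.1, y.2).

Definition degree_criterion adj : Prop :=
  forall v, deg adj v = deg (ptrans adj) v.

(* identification of the basis of C^(a*b) with |i> ⊗ |j>, via MathComp's
   standard bijection 'I_(a*b) <-> 'I_a * 'I_b (inverse of mxvec_index) *)
Definition grid_of (k : 'I_(a * b)) : gridV a b :=
  enum_val (cast_ord (esym (mxvec_cast a b)) k).

Variable C : numClosedFieldType.

Definition kron (A : 'M[C]_a) (B : 'M[C]_b) : 'M[C]_(a * b) :=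
  \matrix_(k, l) (A (grid_of k).1 (grid_of l).1 * B (grid_of k).2 (grid_of l).2).

Definition laplacian adj : 'M[C]_(a * b) :=
  \matrix_(k, l)
    (if grid_of k == grid_of l then (deg adj (grid_of k))%:R
     else if adj (grid_of k) (grid_of l) then -1 else 0).

Definition rho adj : 'M[C]_(a * b) :=
  ((2 * #|edges adj|)%:R)^-1 *: laplacian adj.
End Grid.

Section Density.
Variable C : numClosedFieldType.

Definition psd n (A : 'M[C]_n) : Prop :=
  forall v : 'rV[C]_n, 0 <= (v *m A *m (map_mx Num.conj v)^T) 0 0.

Definition density n (A : 'M[C]_n) : Prop := psd A /\ \tr A = 1.

Definition separable a b (rho : 'M[C]_(a * b)) : Prop :=
  exists (N : nat) (p : 'I_N -> C) (A : 'I_N -> 'M[C]_a) (B : 'I_N -> 'M[C]_b),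
    [/\ forall k, 0 <= p k,
        \sum_k p k = 1,
        forall k, density (A k) /\ density (B k)
      & rho = \sum_k p k *: kron (A k) (B k)].
End Density.

(* Main.v *)
Require Import Defs.
From HB Require Import structures.
From mathcomp Require Import all_boot all_order all_algebra all_fingroup.
From mathcomp Require cyclic separable cyclotomic.
From mathcomp Require Import ring zify.
Set Implicit Arguments. Unset Strict Implicit. Unset Printing Implicit Defensive.
Import Order.TTheory GRing.Theory Num.Theory.
Local Open Scope ring_scope.


Section Quad.
Variable C : numClosedFieldType.

Lemma real_quad_zero (x d : C) : 0 <= d ->
  (forall t : C, t \is Num.real -> 0 <= t * x + t ^+ 2 * d) -> x = 0.
Proof.
move=> d0 H.
have dr : d \is Num.real by exact: ger0_real.
have xr : x \is Num.real.
  have := H 1 (rpred1 _); rewrite mul1r expr1n mul1r => /ger0_real xdr.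
  by rewrite -(addrK d x); apply: rpredB.
have d1 : 0 < d + 1 by rewrite ltr_wpDl // ltr01.
have d1n : d + 1 != 0 by rewrite gt_eqF.
pose t := - x / (d + 1).
have tr : t \is Num.real.
  by rewrite /t rpredM ?rpredN ?rpredV ?rpredD ?rpred1.
have := H t tr.
have xc : x^* = x by apply/eqP; rewrite -CrealE.
have -> : t * x + t ^+ 2 * d = - (x * x^* / (d + 1) ^+ 2).
  rewrite xc /t; field; exact: d1n.
rewrite oppr_ge0 => hle.
have hge : 0 <= x * x^* / (d + 1) ^+ 2.
  by rewrite divr_ge0 ?mul_conjC_ge0 // exprn_ge0 // ltW.
have : x * x^* / (d + 1) ^+ 2 == 0 by rewrite eq_le hle hge.
rewrite mulf_eq0 invr_eq0 expf_eq0 (negbTE d1n) andbF orbF mul_conjC_eq0.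
by move/eqP.
Qed.

Lemma quad_zero (p q d : C) : 0 <= d ->
  (forall t : C, 0 <= t * p + t^* * q + t * t^* * d) -> p = 0 /\ q = 0.
Proof.
move=> d0 H.
have h1 : p + q = 0.
  apply: (real_quad_zero d0) => t tr.
  have tc : t^* = t by apply/eqP; rewrite -CrealE.
  by have := H t; rewrite tc; congr (0 <= _); ring.
have h2 : 'i * (p - q) = 0.
  apply: (real_quad_zero d0) => t tr.
  have tc : t^* = t by apply/eqP; rewrite -CrealE.
  have := H ('i * t); rewrite rmorphM /= tc conjCi.
  have hi : 'i * 'i = -1 :> C by rewrite -expr2 sqrCi.
  have E : 'i * t * (- 'i * t) = t ^+ 2.
    have -> : 'i * t * (- 'i * t) = - ('i * 'i) * t ^+ 2 by ring.
    by rewrite hi opprK mul1r.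
  by rewrite E; congr (0 <= _); ring.
have h3 : p - q = 0 by move: h2 => /eqP; rewrite mulf_eq0 (negbTE (neq0Ci C)) /= => /eqP.
have hp : p *+ 2 = 0.
  have -> : p *+ 2 = (p + q) + (p - q) by rewrite mulr2n; ring.
  by rewrite h1 h3 addr0.
have p0 : p = 0 by move/eqP: hp; rewrite mulrn_eq0 /= => /eqP.
by split => //; move: h1; rewrite p0 add0r.
Qed.
End Quad.
Section Prim.
Variable C : numClosedFieldType.

Lemma prim_root_exists n : (n > 0)%N -> exists z : C, n.-primitive_root z.
Proof.
pose p : {poly C} := 'X^n - 1; have [r Dp] := closed_field_poly_normal p.
move=> n_gt0; rewrite (monicP _) ?monicXnsubC // scale1r in Dp.
have rn1: all n.-unity_root r by apply/allP=> z; rewrite -root_prod_XsubC -Dp.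
have sz_r: (n < (size r).+1)%N.
  by rewrite -(size_prod_XsubC r id) -Dp size_XnsubC.
have [|z] := hasP (cyclic.has_prim_root n_gt0 rn1 _ sz_r); last by exists z.
by rewrite -separable.separable_prod_XsubC -Dp cyclotomic.separable_Xn_sub_1 // pnatr_eq0 -lt0n.
Qed.
End Prim.
Section Grid.
Variables (C : numClosedFieldType) (a b : nat).
Local Notation T := (gridV a b).

Definition gidx (u : T) : 'I_(a * b) := cast_ord (mxvec_cast a b) (enum_rank u).
Lemma gidxK : cancel gidx (@grid_of a b).
Proof. by move=> u; rewrite /grid_of /gidx cast_ordK enum_rankK. Qed.
Lemma grid_ofK : cancel (@grid_of a b) gidx.
Proof. by move=> k; rewrite /grid_of /gidx enum_valK cast_ordKV. Qed.

Definition mf (M : 'M[C]_(a * b)) (u v : T) := M (gidx u) (gidx v).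

Lemma mf_inj M N : (forall u v, mf M u v = mf N u v) -> M = N.
Proof. by move=> H; apply/matrixP => k l; rewrite -(grid_ofK k) -(grid_ofK l); apply: H. Qed.

Lemma sum_grid (F : T -> C) : \sum_(k < a * b) F (grid_of k) = \sum_u F u.
Proof.
rewrite (reindex gidx) /=; first by apply: eq_bigr => u _; rewrite gidxK.
by exists (@grid_of a b) => x _; [rewrite gidxK | rewrite grid_ofK].
Qed.

Lemma mf_lap adj u v : mf (laplacian C adj) u v =
  if u == v then (deg adj u)%:R else if adj u v then -1 else 0.
Proof. by rewrite /mf mxE !gidxK. Qed.

Lemma mf_kron A B u v : mf (@kron a b C A B) u v = A u.1 v.1 * B u.2 v.2.
Proof. by rewrite /mf mxE !gidxK. Qed.

Lemma mf_sum I (r : seq I) (P : pred I) (F : I -> 'M[C]_(a * b)) u v :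
  mf (\sum_(i <- r | P i) F i) u v = \sum_(i <- r | P i) mf (F i) u v.
Proof. by rewrite /mf summxE. Qed.

Lemma mf_scale c M u v : mf (c *: M) u v = c * mf M u v.
Proof. by rewrite /mf mxE. Qed.

Lemma tr_mf M : \tr M = \sum_u mf M u u.
Proof.
rewrite /mxtrace -sum_grid; apply: eq_bigr => k _.
by rewrite /mf grid_ofK.
Qed.
End Grid.

Section QF.
Variable C : numClosedFieldType.
Definition qf n (A : 'M[C]_n) (v : 'I_n -> C) :=
  \sum_i \sum_j v i * A i j * (v j)^*.

Lemma qfE n (A : 'M[C]_n) (w : 'rV[C]_n) :
  (w *m A *m (map_mx Num.conj w)^T) 0 0 = qf A (fun i => w 0 i).
Proof.
rewrite [LHS]mxE /qf exchange_big /=; apply: eq_bigr => j _.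
rewrite [X in X * _]mxE [X in _ * X]mxE mxE mulr_suml; apply: eq_bigr => i _.
done.
Qed.

Lemma psd_qf n (A : 'M[C]_n) : psd A -> forall v, 0 <= qf A v.
Proof.
move=> H v; have := H (\row_i v i); rewrite qfE /qf.
congr (0 <= _); apply: eq_bigr => i _; apply: eq_bigr => j _; by rewrite !mxE.
Qed.

Lemma sum_delta n (f : 'I_n -> C) j0 : \sum_j f j * (j == j0)%:R = f j0.
Proof.
rewrite (bigD1 j0) //= eqxx mulr1 big1 ?addr0 // => j /negbTE ->.
by rewrite mulr0.
Qed.

Lemma sum_deltal n (f : 'I_n -> C) j0 : \sum_j (j == j0)%:R * f j = f j0.
Proof. by under eq_bigr do rewrite mulrC; rewrite sum_delta. Qed.

Lemma psd_zero n (A : 'M[C]_n) v : psd A -> qf A v = 0 ->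
  (forall j, \sum_i v i * A i j = 0) /\ (forall i, \sum_j A i j * (v j)^* = 0).
Proof.
move=> H q0.
suff K : forall j0, \sum_i v i * A i j0 = 0 /\ \sum_j A j0 j * (v j)^* = 0.
  by split => j; case: (K j).
move=> j0.
pose p := \sum_j A j0 j * (v j)^*.
pose q := \sum_i v i * A i j0.
have d0 : 0 <= A j0 j0.
  have := psd_qf H (fun i => (i == j0)%:R).
  rewrite /qf (eq_bigr (fun i => (i == j0)%:R * A i j0)); first by rewrite sum_deltal.
  move=> i _; rewrite (eq_bigr (fun j => ((i == j0)%:R * A i j) * (j == j0)%:R)).
    by rewrite sum_delta.
  by move=> j _; rewrite conjC_nat.
suff [hp hq] : p = 0 /\ q = 0 by [].
apply: (quad_zero d0) => t.
have := psd_qf H (fun i => v i + t * (i == j0)%:R).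
suff -> : qf A (fun i => v i + t * (i == j0)%:R) =
   t * p + t^* * q + t * t^* * A j0 j0 by [].
rewrite /qf.
transitivity (\sum_i \sum_j (v i * A i j * (v j)^* + t * ((i == j0)%:R * (A i j * (v j)^*))
   + t^* * ((v i * A i j) * (j == j0)%:R) + t * t^* * ((i == j0)%:R * (A i j * (j == j0)%:R)))).
  apply: eq_bigr => i _; apply: eq_bigr => j _.
  rewrite rmorphD rmorphM /= conjC_nat; ring.
under eq_bigr do rewrite big_split /= big_split /= big_split /=.
rewrite big_split /= big_split /= big_split /= -/(qf A v) q0 add0r.
congr (_ + _ + _).
- rewrite (eq_bigr (fun i => (i == j0)%:R * (t * \sum_j A i j * (v j)^*))).
    by rewrite sum_deltal.
  by move=> i _; rewrite -mulr_sumr -mulr_sumr; ring.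
- rewrite exchange_big /= (eq_bigr (fun j => t^* * (\sum_i v i * A i j) * (j == j0)%:R)).
    by rewrite sum_delta.
  move=> j _; rewrite -mulrA mulr_suml mulr_sumr; apply: eq_bigr => i _; ring.
- rewrite (eq_bigr (fun i => (i == j0)%:R * (t * t^* * A i j0))).
    by rewrite sum_deltal.
  move=> i _; rewrite (eq_bigr (fun j => (t * t^* * (i == j0)%:R * A i j) * (j == j0)%:R)).
    by rewrite sum_delta; ring.
  by move=> j _; ring.
Qed.
End QF.
Section Nec.
Variables (C : numClosedFieldType) (a b : nat).
Local Notation T := (gridV a b).

Lemma card_sum (X : finType) (P : pred X) :
  (#|[set y | P y]|)%:R = \sum_y ((P y)%:R : C).
Proof.
rewrite -sum1_card natr_sum big_mkcond /=; apply: eq_bigr => y _.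
by rewrite inE; case: (P y).
Qed.

Lemma rowsum_helper (X : finType) (x : X) (D : C) (P : pred X) : P x = false ->
  \sum_y (if y == x then D else if P y then -1 else 0) = D - \sum_y (P y)%:R.
Proof.
move=> Px; rewrite (bigD1 x) //= eqxx [in RHS](bigD1 x) //= Px /= mulr0n add0r.
rewrite -sumrN; congr (_ + _); apply: eq_bigr => y hy; rewrite (negbTE hy).
by case: (P y); rewrite ?oppr0.
Qed.

Lemma lap_rowsum (adj : rel T) x : irreflexive adj ->
  \sum_y mf (laplacian C adj) x y = 0.
Proof.
move=> irr.
rewrite (eq_bigr (fun y => if y == x then (deg adj x)%:R else if adj x y then -1 else 0)).
  by rewrite rowsum_helper ?irr // -card_sum subrr.
by move=> y _; rewrite mf_lap eq_sym; case: eqP => // ->.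
Qed.

Lemma pt_sum (F : T -> T -> C) :
  \sum_u \sum_v F (v.1, u.2) (u.1, v.2) = \sum_u \sum_v F u v.
Proof.
rewrite !pair_bigA /=.
pose phi (p : T * T) : T * T := ((p.2.1, p.1.2), (p.1.1, p.2.2)).
have phiK : involutive phi by case=> [[? ?] [? ?]].
rewrite (reindex_inj (inv_inj phiK)) /=.
by apply: eq_bigr => [[[? ?] [? ?]]].
Qed.

Lemma necessity (adj : rel T) : simple_graph adj -> (0 < #|edges adj|)%N ->
  separable (rho C adj) -> degree_criterion adj.
Proof.
move=> [sym irr] m0 [N [p [A [B [hp hs hd hr]]]]].
set c := ((2 * #|edges adj|)%:R : C)^-1.
have c0 : c != 0 by rewrite invr_eq0 pnatr_eq0 muln_eq0 /= -lt0n m0.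
have mrho : forall u v, mf (rho C adj) u v = c * mf (laplacian C adj) u v.
  by move=> u v; rewrite /rho mf_scale.
have msep : forall u v, mf (rho C adj) u v =
    \sum_k p k * (A k u.1 v.1 * B k u.2 v.2).
  by move=> u v; rewrite hr mf_sum; apply: eq_bigr => k _; rewrite mf_scale mf_kron.
pose al k := \sum_i \sum_j A k i j.
pose be k := \sum_i \sum_j B k i j.
have qa : forall k, qf (A k) (fun=> 1) = al k.
  move=> k; apply: eq_bigr => i _; apply: eq_bigr => j _.
  by rewrite conjC1 mulr1 mul1r.
have qb : forall k, qf (B k) (fun=> 1) = be k.
  move=> k; apply: eq_bigr => i _; apply: eq_bigr => j _.
  by rewrite conjC1 mulr1 mul1r.
have al0 : forall k, 0 <= al k.
  by move=> k; rewrite -qa; apply: psd_qf; case: (hd k) => [[]].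
have be0 : forall k, 0 <= be k.
  by move=> k; rewrite -qb; apply: psd_qf; case: (hd k) => _ [].
pose S u := \sum_v mf (rho C adj) (v.1, u.2) (u.1, v.2).
have S2 : forall u, S u = \sum_k p k * ((\sum_i A k i u.1) * (\sum_j B k u.2 j)).
  move=> u; rewrite /S; under eq_bigr do rewrite msep.
  rewrite exchange_big /=; apply: eq_bigr => k _.
  rewrite -mulr_sumr; congr (_ * _).
  rewrite -(pair_bigA _ (fun i j => A k i u.1 * B k u.2 j)) /= mulr_suml.
  by apply: eq_bigr => i _; rewrite mulr_sumr.
have Stot : \sum_u S u = \sum_k p k * (al k * be k).
  rewrite (eq_bigr _ (fun u _ => S2 u)) exchange_big /=; apply: eq_bigr => k _.
  rewrite -mulr_sumr; congr (_ * _).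
  rewrite -(pair_bigA _ (fun i j => (\sum_i0 A k i0 i) * (\sum_j0 B k j j0))) /=.
  by rewrite -big_distrlr /= /al /be [X in X * _]exchange_big.
have Stot0 : \sum_u S u = 0.
  rewrite /S pt_sum big1 // => u _.
  by under eq_bigr do rewrite mrho; rewrite -mulr_sumr lap_rowsum // mulr0.
have term0 : forall k, p k * (al k * be k) = 0.
  move=> k; apply: (@psumr_eq0P _ _ predT (fun k => p k * (al k * be k))) => //.
    by move=> i _; rewrite mulr_ge0 ?mulr_ge0.
  by rewrite -Stot Stot0.
have Su0 : forall u, S u = 0.
  move=> u; rewrite S2 big1 // => k _.
  have := term0 k; move/eqP; rewrite !mulf_eq0 => /orP [/eqP -> | /orP [] /eqP h].
  - by rewrite mul0r.
  - have [h1 _] := psd_zero (v := fun=> 1) (proj1 (proj1 (hd k))) (etrans (qa k) h).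
    by have := h1 u.1; under eq_bigr do rewrite mul1r; move => ->; rewrite mul0r mulr0.
  - have [_ h2] := psd_zero (v := fun=> 1) (proj1 (proj2 (hd k))) (etrans (qb k) h).
    have := h2 u.2; under eq_bigr do rewrite conjC1 mulr1; move => ->.
    by rewrite mulr0 mulr0.
move=> u.
have := Su0 u; rewrite /S.
under eq_bigr do rewrite mrho.
rewrite -mulr_sumr => /eqP; rewrite mulf_eq0 (negbTE c0) /= => /eqP.
rewrite (eq_bigr (fun v => if v == u then (deg adj u)%:R else if ptrans adj u v then -1 else 0)).
  rewrite rowsum_helper; last by rewrite /ptrans irr.
  by rewrite -card_sum => /eqP; rewrite subr_eq0 eqr_nat => /eqP.
move=> v _; rewrite mf_lap.
have -> : ((v.1, u.2) == (u.1, v.2)) = (v == u).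
  case: u v => [u1 u2] [v1 v2] /=; rewrite !xpair_eqE; apply/andP/andP.
    by case=> /eqP -> /eqP ->.
  by case=> /eqP -> /eqP ->.
by case: eqP => [-> | _] //; case: u.
Qed.
End Nec.
Section SC.
Variables (C : numClosedFieldType) (a b : nat).
Local Notation T := (gridV a b).

Definition Prod (x : 'I_a -> C) (y : 'I_b -> C) (g h : T) : C :=
  x g.1 * (x h.1)^* * (y g.2 * (y h.2)^*).

Definition SCg (F : T -> T -> C) := exists s : seq (('I_a -> C) * ('I_b -> C)),
  forall g h, F g h = \sum_(q <- s) Prod q.1 q.2 g h.

Lemma SCg_ext F G : (forall g h, F g h = G g h) -> SCg F -> SCg G.
Proof. by move=> e [s hs]; exists s => g h; rewrite -e hs. Qed.

Lemma SCg0 : SCg (fun _ _ => 0).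
Proof. by exists [::] => g h; rewrite big_nil. Qed.

Lemma SCg_add F G : SCg F -> SCg G -> SCg (fun g h => F g h + G g h).
Proof.
by move=> [s1 h1] [s2 h2]; exists (s1 ++ s2) => g h; rewrite big_cat h1 h2.
Qed.

Lemma SCg_prod x y : SCg (Prod x y).
Proof. by exists [:: (x, y)] => g h; rewrite big_seq1. Qed.

Lemma SCg_scale c F : 0 <= c -> SCg F -> SCg (fun g h => c * F g h).
Proof.
move=> c0 [s hs].
exists [seq ((fun i => sqrtC c * q.1 i), q.2) | q <- s] => g h.
rewrite big_map hs mulr_sumr; apply: eq_bigr => q _ /=.
have sc : (sqrtC c)^* = sqrtC c.
  by apply/eqP; rewrite -CrealE ger0_real // sqrtC_ge0.
rewrite /Prod /= rmorphM /= sc.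
set r := sqrtC c.
have -> : c = r * r by rewrite /r -expr2 sqrtCK.
ring.
Qed.

Lemma SCg_sum I (r : seq I) (P : pred I) (F : I -> T -> T -> C) :
  (forall i, P i -> SCg (F i)) -> SCg (fun g h => \sum_(i <- r | P i) F i g h).
Proof.
move=> H; elim: r => [|i r IH].
  by apply: SCg_ext SCg0 => g h; rewrite big_nil.
case Pi: (P i).
  by apply: SCg_ext (SCg_add (H i Pi) IH) => g h; rewrite big_cons Pi.
by apply: SCg_ext IH => g h; rewrite big_cons Pi.
Qed.

Definition nrm n (x : 'I_n -> C) := \sum_i x i * (x i)^*.

Lemma nrm_ge0 n (x : 'I_n -> C) : 0 <= nrm x.
Proof. by apply: sumr_ge0 => i _; exact: mul_conjC_ge0. Qed.

Lemma nrm_eq0 n (x : 'I_n -> C) : nrm x = 0 -> forall i, x i = 0.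
Proof.
move=> h i; apply/eqP; rewrite -mul_conjC_eq0; apply/eqP.
by apply: (@psumr_eq0P _ _ predT (fun i => x i * (x i)^*)) => // j _; exact: mul_conjC_ge0.
Qed.

Definition R1 n (x : 'I_n -> C) : 'M[C]_n := \matrix_(i, j) (x i * (x j)^*).

Lemma density_R1 n (x : 'I_n -> C) : nrm x != 0 -> density ((nrm x)^-1 *: R1 x).
Proof.
move=> nz; split.
  move=> w; rewrite qfE /qf.
  set z := \sum_i w 0 i * x i.
  have -> : \sum_i \sum_j w 0 i * ((nrm x)^-1 *: R1 x) i j * (w 0 j)^* =
      (nrm x)^-1 * (z * z^*).
    rewrite /z rmorph_sum /= mulr_suml mulr_sumr; apply: eq_bigr => i _.
    rewrite mulr_sumr mulr_sumr; apply: eq_bigr => j _.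
    rewrite !mxE rmorphM /=; ring.
  by rewrite mulr_ge0 ?invr_ge0 ?nrm_ge0 ?mul_conjC_ge0.
rewrite /mxtrace (eq_bigr (fun i => (nrm x)^-1 * (x i * (x i)^*))).
  by rewrite -mulr_sumr mulVf.
by move=> i _; rewrite !mxE.
Qed.

Lemma SCg_sep (M : 'M[C]_(a * b)) : SCg (mf M) -> \tr M = 1 -> separable M.
Proof.
move=> [s hs] tr1.
pose P (q : ('I_a -> C) * ('I_b -> C)) := (nrm q.1 != 0) && (nrm q.2 != 0).
pose s' := [seq q <- s | P q].
have hs' : forall g h, mf M g h = \sum_(q <- s') Prod q.1 q.2 g h.
  move=> g h; rewrite hs big_filter [RHS]big_mkcond /=; apply: eq_bigr => q _.
  case Pq: (P q) => //; move: Pq; rewrite /P => /nandP [] /negPn /eqP /nrm_eq0 z.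
    by rewrite /Prod !z mul0r mul0r.
  by rewrite /Prod !z mul0r mulr0.
pose d : ('I_a -> C) * ('I_b -> C) := (fun=> 0, fun=> 0).
pose q k := nth d s' k.
have Pq : forall k : 'I_(size s'), P (q k).
  by move=> k; apply: (all_nthP d (filter_all P s)).
exists (size s'), (fun k => nrm (q k).1 * nrm (q k).2),
  (fun k => (nrm (q k).1)^-1 *: R1 (q k).1),
  (fun k => (nrm (q k).2)^-1 *: R1 (q k).2).
have sumq : forall (F : ('I_a -> C) * ('I_b -> C) -> C),
    \sum_(k < size s') F (q k) = \sum_(x <- s') F x.
  by move=> F; rewrite (big_nth d) big_mkord.
split.
- by move=> k; rewrite mulr_ge0 ?nrm_ge0.
- rewrite (sumq (fun x => nrm x.1 * nrm x.2)) -tr1 tr_mf.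
  under [RHS]eq_bigr do rewrite hs'.
  rewrite exchange_big /=; apply: eq_bigr => x _.
  rewrite -(pair_bigA _ (fun i j => Prod x.1 x.2 (i, j) (i, j))) /= /nrm big_distrlr /=.
  by apply: eq_bigr => i _; apply: eq_bigr => j _.
- by move=> k; case/andP: (Pq k) => h1 h2; split; apply: density_R1.
apply: mf_inj => g h; rewrite hs' mf_sum -(sumq (fun x => Prod x.1 x.2 g h)).
apply: eq_bigr => k _; rewrite mf_scale mf_kron !mxE.
case/andP: (Pq k) => h1 h2.
rewrite /Prod; field.
by rewrite h1 h2.
Qed.
End SC.
Section Lap.
Variables (C : numClosedFieldType) (a b : nat).
Local Notation T := (gridV a b).

Definition dl (u v : T) : C := (u == v)%:R.
Definition Le (u v g h : T) : C := (dl g u - dl g v) * (dl h u - dl h v).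

Lemma sum_dl (X : finType) (f : X -> C) x0 : \sum_x f x * (x == x0)%:R = f x0.
Proof.
rewrite (bigD1 x0) //= eqxx mulr1 big1 ?addr0 // => x hx.
by rewrite (negbTE hx) mulr0.
Qed.

Lemma sum_dl' (X : finType) (f : X -> C) x0 : \sum_x f x * (x0 == x)%:R = f x0.
Proof. by under eq_bigr do rewrite eq_sym; rewrite sum_dl. Qed.

Lemma L_a (F : T -> C) g h : \sum_u F u * dl g u * dl h u = F g * dl h g.
Proof.
rewrite (eq_bigr (fun u => (F u * dl h u) * (g == u)%:R)) ?sum_dl' // => u _.
by rewrite /dl; ring.
Qed.

Lemma L_b (F : T -> T -> C) g h : \sum_u \sum_v F u v * dl g u * dl h v = F g h.
Proof.
rewrite (eq_bigr (fun u => F u h * (g == u)%:R)) ?sum_dl' // => u _.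
by rewrite (eq_bigr (fun v => (F u v * dl g u) * (h == v)%:R)) ?sum_dl'.
Qed.

Lemma lap2 (adj : rel T) g h : symmetric adj -> irreflexive adj ->
  mf (laplacian C adj) g h *+ 2 =
  \sum_u \sum_v (adj u v)%:R * Le u v g h.
Proof.
move=> sym irr.
have degE : forall x, (deg adj x)%:R = \sum_v ((adj x v)%:R : C) by move=> x; rewrite card_sum.
transitivity (\sum_u \sum_v ((adj u v)%:R * dl g u * dl h u - (adj u v)%:R * dl g u * dl h v
   - (adj u v)%:R * dl h u * dl g v + (adj v u)%:R * dl g v * dl h v)); last first.
  apply: eq_bigr => u _; apply: eq_bigr => v _; rewrite /Le sym; ring.
under eq_bigr do rewrite big_split /= big_split /= big_split /= !sumrN.
rewrite big_split /= big_split /= big_split /= !sumrN.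
have e1 : \sum_u \sum_v (adj u v)%:R * dl g u * dl h u = (deg adj g)%:R * dl h g :> C.
  rewrite -(L_a (fun u => (deg adj u)%:R)); apply: eq_bigr => u _.
  by rewrite degE !mulr_suml.
have e4 : \sum_u \sum_v (adj v u)%:R * dl g v * dl h v = (deg adj g)%:R * dl h g :> C.
  rewrite exchange_big /= -(L_a (fun u => (deg adj u)%:R)); apply: eq_bigr => u _.
  by rewrite degE !mulr_suml.
have e2 : \sum_u \sum_v (adj u v)%:R * dl g u * dl h v = (adj g h)%:R :> C.
  exact: (L_b (fun u v => (adj u v)%:R)).
have e3 : \sum_u \sum_v (adj u v)%:R * dl h u * dl g v = (adj h g)%:R :> C.
  exact: (L_b (fun u v => (adj u v)%:R)).
rewrite e1 e2 e3 e4 mf_lap /dl (sym h g) eq_sym.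
case: eqP => [-> | _]; first by rewrite irr mulr1 subr0 subr0 mulr2n.
by case: (adj g h) => /=; rewrite ?mulr0n !mulr0 ?mulr2n; ring.
Qed.
End Lap.
Section Split.
Variables (C : numClosedFieldType) (a b : nat).
Local Notation T := (gridV a b).

Lemma dl_split (g u : T) : dl C g u = (g.1 == u.1)%:R * (g.2 == u.2)%:R.
Proof.
case: g u => [g1 g2] [u1 u2]; rewrite /dl xpair_eqE /=.
by case: (g1 == u1); case: (g2 == u2); rewrite ?mul1r ?mul0r.
Qed.

Lemma SCg_Le_nondiag (u v : T) : ~~ diagonal u v -> SCg (Le C u v).
Proof.
rewrite /diagonal negb_and !negbK => /orP [] /eqP e.
- apply: SCg_ext (SCg_prod (fun i => (i == u.1)%:R)
      (fun j => (j == u.2)%:R - (j == v.2)%:R)) => g h.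
  rewrite /Le /Prod !dl_split -e !rmorphB /= !conjC_nat; ring.
- apply: SCg_ext (SCg_prod (fun i => (i == u.1)%:R - (i == v.1)%:R)
      (fun j => (j == u.2)%:R)) => g h.
  rewrite /Le /Prod !dl_split -e !rmorphB /= !conjC_nat; ring.
Qed.

Definition Afun (adj : rel T) : pred (T * T) :=
  fun e => [&& adj e.1 e.2, diagonal e.1 e.2 & (e.2.1 == e.1.1.+1 :> nat)].

Lemma half_eq (x y z : C) : x *+ 2 = y + z *+ 2 -> x = 2%:R^-1 * y + z.
Proof.
have two : (2%:R : C) != 0 by rewrite pnatr_eq0.
have e : forall w : C, w *+ 2 = 2%:R * w by move=> w; rewrite mulr_natl.
move=> h; have -> : x = 2%:R^-1 * (x *+ 2).
  by rewrite e mulrA mulVf ?mul1r.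
rewrite h mulrDr; congr (_ + _).
by rewrite e mulrA mulVf ?mul1r.
Qed.

Lemma lap_split (adj : rel T) g h : simple_graph adj -> row_stratified adj ->
  mf (laplacian C adj) g h =
  2%:R^-1 * \sum_(e | adj e.1 e.2 && ~~ diagonal e.1 e.2) Le C e.1 e.2 g h
  + \sum_(e | Afun adj e) Le C e.1 e.2 g h.
Proof.
move=> [sym irr] rs.
have two : (2%:R : C) != 0 by rewrite pnatr_eq0.
suff key : mf (laplacian C adj) g h *+ 2 =
  \sum_(e | adj e.1 e.2 && ~~ diagonal e.1 e.2) Le C e.1 e.2 g h
  + (\sum_(e | Afun adj e) Le C e.1 e.2 g h) *+ 2.
  exact: half_eq.
rewrite lap2 // pair_bigA /=.
rewrite (eq_bigr (fun e => if adj e.1 e.2 then Le C e.1 e.2 g h else 0)); last first.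
  by move=> e _; case: (adj _ _); rewrite ?mul1r ?mul0r.
rewrite -big_mkcond /= (bigID (fun e => diagonal e.1 e.2)) /= addrC.
congr (_ + _).
rewrite (bigID (fun e : T * T => (e.2.1 == e.1.1.+1 :> nat))) /= mulr2n.
have -> : \sum_(e | (adj e.1 e.2 && diagonal e.1 e.2) && ~~ (e.2.1 == e.1.1.+1 :> nat))
    Le C e.1 e.2 g h = \sum_(e | Afun adj e) Le C e.1 e.2 g h.
  pose sw (e : T * T) := (e.2, e.1).
  have swK : involutive sw by case.
  rewrite (reindex_inj (inv_inj swK)) /=.
  apply: eq_big => [[u v] /= | [u v] _]; last by rewrite /Le; ring.
  rewrite /Afun /= sym /diagonal [u.1 == _]eq_sym [u.2 == _]eq_sym.
  case d: ((v.1 != u.1) && (v.2 != u.2)); rewrite /= ?andbF ?andbT //.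
  case avu: (adj u v) => //=.
  have := rs v u; rewrite sym avu /diagonal d => /(_ isT isT).
  by case/orP => /eqP <-; rewrite ?eqxx ?ltn_eqF.
by congr (_ + _); apply: eq_bigl => e; rewrite /Afun andbA.
Qed.
End Split.
Lemma perm_fiber (X : finType) (B : eqType) (f1 f2 : X -> B) :
  (forall y, #|[set x | f1 x == y]| = #|[set x | f2 x == y]|) ->
  exists s : {perm X}, forall x, f2 (s x) = f1 x.
Proof.
move=> H.
pose e1 y := enum [set x | f1 x == y].
pose e2 y := enum [set x | f2 x == y].
pose g x := nth x (e2 (f1 x)) (index x (e1 (f1 x))).
have xin : forall x, x \in e1 (f1 x) by move=> x; rewrite mem_enum inE.
have lt : forall x, (index x (e1 (f1 x)) < size (e2 (f1 x)))%N.
  by move=> x; rewrite /e2 -cardE -H cardE index_mem.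
have lt1 : forall x, (index x (e1 (f1 x)) < size (e1 (f1 x)))%N.
  by move=> x; rewrite index_mem.
have gin : forall x, g x \in e2 (f1 x) by move=> x; apply: mem_nth.
have g2 : forall x, f2 (g x) = f1 x.
  by move=> x; have := gin x; rewrite mem_enum inE => /eqP.
have ginj : injective g.
  move=> x x' e.
  have fe : f1 x = f1 x' by rewrite -g2 e g2.
  have i1 : index x (e1 (f1 x)) = index x' (e1 (f1 x)).
    have := index_uniq x (lt x) (enum_uniq _).
    have := index_uniq x' (lt x') (enum_uniq _).
    rewrite -/(g x) -/(g x') -fe e => <- <-.
    by rewrite fe.
  by rewrite -(nth_index x (xin x)) i1 (set_nth_default x' x) ?fe ?lt1 // nth_index // -fe xin.
exists (perm ginj) => x; by rewrite permE.
Qed.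
Lemma cardS (X : finType) (P : pred X) : #|[set x | P x]| = \sum_x (P x : nat).
Proof.
rewrite -sum1_card big_mkcond /=; apply: eq_bigr => x _.
by rewrite inE; case: (P x).
Qed.

Section Balance.
Variables (a b : nat).
Local Notation T := (gridV a b).
Variable adj : rel T.
Hypothesis sym : symmetric adj.
Hypothesis irr : irreflexive adj.
Hypothesis rs : row_stratified adj.

Lemma diag_sym (u v : T) : diagonal u v = diagonal v u.
Proof. by rewrite /diagonal eq_sym [u.2 == _]eq_sym. Qed.

Lemma split1 (u v : T) : (adj u v : nat) =
  ((adj u v && ~~ diagonal u v) : nat) + Afun adj (u, v) + Afun adj (v, u).
Proof.
rewrite /Afun /= (sym v u) (diag_sym v u).
case avu: (adj u v) => //=.
case d: (diagonal u v) => //=.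
move: (rs avu d).
case: eqP; case: eqP; case: eqP; case: eqP => /=; lia.
Qed.

Lemma split2 (u v : T) : (ptrans adj u v : nat) =
  ((ptrans adj u v && ~~ diagonal u v) : nat) +
  Afun adj ((u.1, v.2), (v.1, u.2)) + Afun adj ((v.1, u.2), (u.1, v.2)).
Proof.
have dd : diagonal (v.1, u.2) (u.1, v.2) = diagonal u v.
  by rewrite /diagonal /= eq_sym [u.2 == _]eq_sym.
rewrite /Afun /ptrans /= (sym (u.1, v.2)) (diag_sym (u.1, v.2)) dd.
case avu: (adj (v.1, u.2) (u.1, v.2)) => //=.
case d: (diagonal u v) => //=.
have := rs avu; rewrite dd => /(_ d) /=.
case: eqP; case: eqP; case: eqP; case: eqP => /=; lia.
Qed.

Lemma nondiag_eq (u v : T) : ~~ diagonal u v -> ptrans adj u v = adj u v.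
Proof.
case: u v => [u1 u2] [v1 v2]; rewrite /diagonal /ptrans /= negb_and !negbK.
by case/orP => /eqP <-; rewrite // sym.
Qed.

Definition outS (u : T) := \sum_v (Afun adj (u, v) : nat).
Definition innS (u : T) := \sum_v (Afun adj ((u.1, v.2), (v.1, u.2)) : nat).
Definition upout (u : T) := \sum_v (Afun adj ((v.1, u.2), (u.1, v.2)) : nat).
Definition upin (u : T) := \sum_v (Afun adj (v, u) : nat).

Lemma crit_eq u : degree_criterion adj ->
  outS u + upin u = innS u + upout u.
Proof.
move=> /(_ u); rewrite /deg !cardS.
rewrite (eq_bigr _ (fun v _ => split1 u v)) (eq_bigr _ (fun v _ => split2 u v)).
rewrite !big_split /= (eq_bigr (fun v => (ptrans adj u v && ~~ diagonal u v) : nat)).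
  have h : forall A B C D E : nat, A + B + C = A + D + E -> B + C = D + E by lia.
  by move/h.
by move=> v _; case d: (diagonal u v) => /=; rewrite ?andbF ?andbT // nondiag_eq ?d.
Qed.

Lemma rowforce (r : 'I_a) (G : T -> bool) :
  \sum_(v : T) ((v.1 == r) && G v : nat) = \sum_l (G (r, l) : nat).
Proof.
rewrite [LHS](_ : _ = \sum_i \sum_j ((i == r) && G (i, j) : nat)); last by rewrite pair_bigA; apply: eq_bigr => -[i j].
rewrite (bigD1 r) //= [X in _ + X]big1 ?addn0.
  by rewrite addr0; apply: eq_bigr => l _; rewrite eqxx.
by move=> i hi; rewrite big1 // => j _; rewrite (negbTE hi).
Qed.

Lemma upin_eq (i k : 'I_a) j : k = i.+1 :> nat -> upin (k, j) = innS (i, j).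
Proof.
move=> hk; rewrite /upin /innS.
rewrite (eq_bigr (fun v => (((v.1 == i) && Afun adj (v, (k, j))) : nat))); last first.
  move=> v _; congr nat_of_bool; apply/idP/andP => [h|[]//]; split=> //.
  move: h; rewrite /Afun /= => /and3P [_ _ /eqP h].
  by apply/eqP; apply: val_inj => /=; lia.
rewrite rowforce.
rewrite [RHS](eq_bigr (fun v => (((v.1 == k) && Afun adj ((i, v.2), (v.1, j))) : nat))); last first.
  move=> v _; congr nat_of_bool; apply/idP/andP => [h|[]//]; split=> //.
  move: h; rewrite /Afun /= => /and3P [_ _ /eqP h].
  by apply/eqP; apply: val_inj => /=; lia.
by rewrite rowforce.
Qed.

Lemma upout_eq (i k : 'I_a) j : k = i.+1 :> nat -> upout (k, j) = outS (i, j).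
Proof.
move=> hk; rewrite /upout /outS.
rewrite (eq_bigr (fun v => (((v.1 == i) && Afun adj ((v.1, j), (k, v.2))) : nat))); last first.
  move=> v _; congr nat_of_bool; apply/idP/andP => [h|[]//]; split=> //.
  move: h; rewrite /Afun /= => /and3P [_ _ /eqP h].
  by apply/eqP; apply: val_inj => /=; lia.
rewrite rowforce.
rewrite [RHS](eq_bigr (fun v => (((v.1 == k) && Afun adj ((i, j), v)) : nat))); last first.
  move=> v _; congr nat_of_bool; apply/idP/andP => [h|[]//]; split=> //.
  move: h; rewrite /Afun /= => /and3P [_ _ /eqP h].
  by apply/eqP; apply: val_inj => /=; lia.
by rewrite rowforce.
Qed.

Lemma up0 (u : T) : u.1 = 0 :> nat -> upin u = 0 /\ upout u = 0.
Proof.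
by move=> h; split; apply: big1 => v _; rewrite /Afun /= h !andbF.
Qed.

Lemma balance : degree_criterion adj -> forall u, outS u = innS u.
Proof.
move=> dc.
suff K : forall n (u : T), u.1 = n :> nat -> outS u = innS u by move=> u; exact: K.
elim=> [|n IH] u hu.
  have := crit_eq u dc; have [-> ->] := up0 hu; by rewrite !addr0.
have na : (n < a)%N by move: (ltn_ord u.1); rewrite hu => /ltnW.
pose i := Ordinal na.
case: u hu => [k j] /= hk.
have := crit_eq (k, j) dc.
rewrite (upin_eq j (i := i)) // (upout_eq j (i := i)) // (IH (i, j)) //.
by move/addIn.
Qed.
End Balance.

Section Roots.
Variable C : numClosedFieldType.
Variables (r : nat) (w : C).
Hypothesis prim : r.-primitive_root w.

Lemma r_gt0 : (0 < r)%N. Proof. exact: prim_order_gt0 prim. Qed.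

Lemma w_norm : w * w^* = 1.
Proof.
have h : `|w| ^+ r = 1 by rewrite -normrX prim_expr_order // normr1.
have : `|w| == 1 by rewrite -(pexpr_eq1 r_gt0) ?normr_ge0 // h.
by move/eqP => n1; rewrite -normCK n1 expr1n.
Qed.

Lemma geo_sum (z : C) : z ^+ r = 1 -> \sum_(k < r) z ^+ k = if z == 1 then r%:R else 0.
Proof.
move=> zr; case: eqP => [-> | /eqP nz].
  by under eq_bigr do rewrite expr1n; rewrite sumr_const card_ord.
have := subrX1 z r; rewrite zr subrr => /esym /eqP; rewrite mulf_eq0 subr_eq0 (negbTE nz) /=.
by move/eqP.
Qed.

Lemma modeq_aux (s s' : nat) : (s + s' * r.-1 == 0 %[mod r]) = (s == s' %[mod r]).
Proof.
rewrite -(eqn_modDr s') add0n.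
have -> : (s + s' * r.-1 + s' = s' * r + s)%N.
  by rewrite -[in RHS](prednK r_gt0) mulnS; lia.
by rewrite modnMDl.
Qed.

Lemma K (s s' : nat) :
  \sum_(k < r) w ^+ (k * s)%N * (w ^+ (k * s')%N)^* = r%:R * ((s %% r)%N == (s' %% r)%N)%:R.
Proof.
have wc : w^* = w ^+ r.-1.
  have wn0 : w != 0.
    by apply/negP => /eqP w0; have := w_norm; rewrite w0 mul0r => /eqP; rewrite eq_sym oner_eq0.
  by apply: (mulfI wn0); rewrite w_norm -exprS (prednK r_gt0) (prim_expr_order prim).
pose z := w ^+ (s + s' * r.-1).
have e : forall k : nat, w ^+ (k * s)%N * (w ^+ (k * s')%N)^* = z ^+ k.
  move=> k; rewrite rmorphXn /= wc -exprM -exprD /z -exprM; congr (_ ^+ _).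
  by rewrite mulnDl mulnC; congr (_ + _); rewrite mulnA mulnC mulnA.
under eq_bigr do rewrite e.
rewrite geo_sum; last by rewrite /z -exprM mulnC exprM (prim_expr_order prim) expr1n.
have -> : (z == 1) = ((s %% r)%N == (s' %% r)%N).
  by rewrite /z -(expr0 w) (eq_prim_root_expr prim) modeq_aux.
by case: (_ == _); rewrite ?mulr1 ?mulr0.
Qed.
End Roots.
Section Fourier.
Variables (C : numClosedFieldType) (a b : nat).
Local Notation T := (gridV a b).
Local Notation X := (T * T)%type.
Variable A : pred X.
Variable pi : {perm X}.
Hypothesis hA : forall e, A (pi e) = A e.
Hypothesis hpi : forall e, A e -> (pi e).1 = (e.1.1, e.2.2).
Hypothesis hrow : forall e, A e -> e.2.1 = e.1.1.+1 :> nat.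
Variable r : nat.
Hypothesis hr : (pi ^+ r = 1)%g.
Variable w : C.
Hypothesis prim : r.-primitive_root w.

Definition pw (s : nat) (e : X) : X := (pi ^+ s)%g e.

Lemma pwS s e : pw s.+1 e = pi (pw s e).
Proof. by rewrite /pw expgSr permM. Qed.

Lemma pw_mod s e : pw (s %% r) e = pw s e.
Proof.
rewrite /pw {2}(divn_eq s r) expgD mulnC expgM hr expg1n mul1g //.
Qed.

Lemma hA_pw s e : A (pw s e) = A e.
Proof. by elim: s => [|s IH]; rewrite ?pwS ?hA // /pw expg0 perm1. Qed.

Lemma row_pw s e : A e -> (pw s e).1.1 = e.1.1.
Proof.
move=> Ae; elim: s => [|s IH]; first by rewrite /pw expg0 perm1.
by rewrite pwS hpi ?hA_pw.
Qed.

Lemma col_pwS s e : A e -> (pw s.+1 e).1.2 = (pw s e).2.2.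
Proof. by move=> Ae; rewrite pwS hpi ?hA_pw. Qed.

Definition cc (s : nat) (e : X) : 'I_b := (pw s e).1.2.

Definition xk (k : nat) (e : X) : 'I_a -> C :=
  fun i => (i == e.1.1 :> nat)%:R - (w ^+ k)^* * (i == e.1.1.+1 :> nat)%:R.
Definition yk (k : nat) (e : X) : 'I_b -> C :=
  fun j => \sum_(s < r) w ^+ (k * s)%N * (cc s e == j)%:R.

Lemma pick_nat (F : nat -> C) n : (n < r)%N -> \sum_(j < r) F j * (n == j)%:R = F n.
Proof.
move=> hn; rewrite (bigD1 (Ordinal hn)) //= eqxx mulr1 big1 ?addr0 // => j hj.
have : (n == j) = false.
  by apply/negP => /eqP e; move: hj; rewrite -val_eqE /= e eqxx.
by move=> ->; rewrite mulr0.
Qed.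

Lemma shift_sum (F : nat -> C) : (0 < r)%N ->
  \sum_(s < r) F ((s.+1) %% r)%N = \sum_(s < r) F s.
Proof.
case: r => [//|r'] _.
rewrite big_ord_recr /= modnn big_ord_recl /=; rewrite addrC; congr (_ + _).
by apply: eq_bigr => i _; rewrite modn_small // ltnS ltn_ord.
Qed.

Lemma unorm k : w ^+ k * (w ^+ k)^* = 1.
Proof. by rewrite rmorphXn /= -exprMn (w_norm prim) expr1n. Qed.

Lemma X_expand k (s s' : nat) (P1 P2 Q1 Q2 : C) :
  (P1 - (w ^+ k)^* * P2) * (Q1 - w ^+ k * Q2) * (w ^+ (k * s)%N * (w ^+ (k * s')%N)^*)
  = (P1 * Q1 + P2 * Q2) * (w ^+ (k * s)%N * (w ^+ (k * s')%N)^*)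
    - P1 * Q2 * (w ^+ (k * s.+1)%N * (w ^+ (k * s')%N)^*)
    - P2 * Q1 * (w ^+ (k * s)%N * (w ^+ (k * s'.+1)%N)^*).
Proof.
rewrite !mulnS !exprD !rmorphM /=.
set u := w ^+ k; set Z := w ^+ (k * s)%N; set Z' := (w ^+ (k * s')%N)^*.
have hu : u * u^* = 1 by exact: unorm.
transitivity ((P1 * Q1 + (u * u^*) * P2 * Q2) * (Z * Z') - P1 * Q2 * (u * Z * Z')
   - P2 * Q1 * (Z * (u^* * Z'))); first by ring.
by rewrite hu mul1r.
Qed.

Lemma sumk e g h : \sum_(k < r) Prod (xk k e) (yk k e) g h =
  r%:R * \sum_(s < r) (
     (g.1 == e.1.1 :> nat)%:R * (h.1 == e.1.1 :> nat)%:R * ((cc s e == g.2)%:R * (cc s e == h.2)%:R)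
   + (g.1 == e.1.1.+1 :> nat)%:R * (h.1 == e.1.1.+1 :> nat)%:R * ((cc s.+1 e == g.2)%:R * (cc s.+1 e == h.2)%:R)
   - (g.1 == e.1.1 :> nat)%:R * (h.1 == e.1.1.+1 :> nat)%:R * ((cc s e == g.2)%:R * (cc s.+1 e == h.2)%:R)
   - (g.1 == e.1.1.+1 :> nat)%:R * (h.1 == e.1.1 :> nat)%:R * ((cc s.+1 e == g.2)%:R * (cc s e == h.2)%:R)).
Proof.
set P1 := ((g.1 == e.1.1 :> nat)%:R : C).
set P2 := ((g.1 == e.1.1.+1 :> nat)%:R : C).
set Q1 := ((h.1 == e.1.1 :> nat)%:R : C).
set Q2 := ((h.1 == e.1.1.+1 :> nat)%:R : C).
pose G (s : nat) : C := (cc s e == g.2)%:R.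
pose H (s : nat) : C := (cc s e == h.2)%:R.
pose Z (k s s' : nat) := w ^+ (k * s)%N * (w ^+ (k * s')%N)^*.
have r0 := r_gt0 prim.
have step1 : forall k : 'I_r, Prod (xk k e) (yk k e) g h =
   \sum_(s < r) \sum_(s' < r) G s * H s' * ((P1 - (w ^+ k)^* * P2) * (Q1 - w ^+ k * Q2) * Z k s s').
  move=> k; rewrite /Prod /xk /yk -/P1 -/P2 -/Q1 -/Q2.
  rewrite !rmorphB !rmorphM /= !conjC_nat conjCK.
  rewrite !rmorph_sum /= big_distrlr /= mulr_sumr; apply: eq_bigr => s _.
  rewrite mulr_sumr; apply: eq_bigr => s' _.
  by rewrite rmorphM /= conjC_nat /G /H /Z; ring.
have step3 : forall s s' : 'I_r,
   \sum_(k < r) (P1 - (w ^+ k)^* * P2) * (Q1 - w ^+ k * Q2) * Z k s s' =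
   r%:R * ((P1 * Q1 + P2 * Q2) * (s == s' :> nat)%:R
     - P1 * Q2 * (((s.+1) %% r)%N == s' :> nat)%:R
     - P2 * Q1 * (s == ((s'.+1) %% r)%N :> nat)%:R).
  move=> s s'; rewrite (eq_bigr _ (fun (k : 'I_r) _ => X_expand k s s' P1 P2 Q1 Q2)).
  rewrite !sumrB -!mulr_sumr /Z !(K prim).
  rewrite (modn_small (ltn_ord s)) (modn_small (ltn_ord s')); ring.
rewrite (eq_bigr _ (fun k _ => step1 k)).
rewrite exchange_big /=.
transitivity (\sum_(s < r) \sum_(s' < r) G s * H s' * (r%:R * ((P1 * Q1 + P2 * Q2) * (s == s' :> nat)%:R
     - P1 * Q2 * (((s.+1) %% r)%N == s' :> nat)%:R
     - P2 * Q1 * (s == ((s'.+1) %% r)%N :> nat)%:R))).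
  apply: eq_bigr => s _; rewrite exchange_big /=; apply: eq_bigr => s' _.
  by rewrite -mulr_sumr step3.
have E1 : \sum_(s < r) \sum_(s' < r) G s * H s' * (s == s' :> nat)%:R = \sum_(s < r) G s * H s.
  by apply: eq_bigr => s _; rewrite (pick_nat (fun j => G s * H j)).
have E2 : \sum_(s < r) \sum_(s' < r) G s * H s' * (((s.+1) %% r)%N == s' :> nat)%:R =
    \sum_(s < r) G s * H ((s.+1) %% r)%N.
  by apply: eq_bigr => s _; rewrite (pick_nat (fun j => G s * H j)) // ltn_pmod.
have E3 : \sum_(s < r) \sum_(s' < r) G s * H s' * (s == ((s'.+1) %% r)%N :> nat)%:R =
    \sum_(s < r) G ((s.+1) %% r)%N * H s.
  rewrite exchange_big /=; apply: eq_bigr => s' _.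
  rewrite (eq_bigr (fun s : 'I_r => G s * H s' * (((s'.+1) %% r)%N == s :> nat)%:R)).
    by rewrite (pick_nat (fun j => G j * H s')) // ltn_pmod.
  by move=> s _; rewrite eq_sym.
transitivity (r%:R * ((P1 * Q1 + P2 * Q2) * \sum_(s < r) G s * H s
   - P1 * Q2 * \sum_(s < r) G s * H ((s.+1) %% r)%N
   - P2 * Q1 * \sum_(s < r) G ((s.+1) %% r)%N * H s)).
  rewrite -E1 -E2 -E3 !mulr_sumr -!sumrB mulr_sumr; apply: eq_bigr => s _.
  rewrite !mulr_sumr -!sumrB mulr_sumr; apply: eq_bigr => s' _; ring.
have gm : forall s, G ((s.+1) %% r)%N = G s.+1 by move=> s; rewrite /G /cc pw_mod.
have hm : forall s, H ((s.+1) %% r)%N = H s.+1 by move=> s; rewrite /H /cc pw_mod.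
have sh : \sum_(s < r) G s * H s = \sum_(s < r) G s.+1 * H s.+1.
  rewrite -(shift_sum (fun s => G s * H s)) //; apply: eq_bigr => s _.
  by rewrite gm hm.
congr (_ * _).
rewrite mulrDl {2}sh.
have e2 : \sum_(s < r) G s * H (s.+1 %% r)%N = \sum_(s < r) G s * H s.+1.
  by apply: eq_bigr => s _; rewrite hm.
have e3 : \sum_(s < r) G (s.+1 %% r)%N * H s = \sum_(s < r) G s.+1 * H s.
  by apply: eq_bigr => s _; rewrite gm.
rewrite e2 e3.
rewrite !mulr_sumr -!big_split /= -!sumrB; apply: eq_bigr => s _.
rewrite /G /H; ring.
Qed.

Lemma avg (F : X -> C) :
  \sum_(e | A e) \sum_(s < r) F (pw s e) = r%:R * \sum_(e | A e) F e.
Proof.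
rewrite exchange_big /= (eq_bigr (fun _ => \sum_(e | A e) F e)).
  by rewrite sumr_const card_ord mulr_natl.
move=> s _.
rewrite (eq_bigl (fun e => A (pw s e))); last by move=> e; rewrite hA_pw.
by rewrite [RHS](reindex_inj (@perm_inj _ (pi ^+ s)%g)).
Qed.

Lemma fourier g h : \sum_(e | A e) Le C e.1 e.2 g h =
  (r%:R ^+ 2)^-1 * \sum_(k < r) \sum_(e | A e) Prod (xk k e) (yk k e) g h.
Proof.
pose Hf (e : X) : C :=
   (g.1 == e.1.1 :> nat)%:R * (h.1 == e.1.1 :> nat)%:R * ((e.1.2 == g.2)%:R * (e.1.2 == h.2)%:R)
 + (g.1 == e.1.1.+1 :> nat)%:R * (h.1 == e.1.1.+1 :> nat)%:R * ((e.2.2 == g.2)%:R * (e.2.2 == h.2)%:R)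
 - (g.1 == e.1.1 :> nat)%:R * (h.1 == e.1.1.+1 :> nat)%:R * ((e.1.2 == g.2)%:R * (e.2.2 == h.2)%:R)
 - (g.1 == e.1.1.+1 :> nat)%:R * (h.1 == e.1.1 :> nat)%:R * ((e.2.2 == g.2)%:R * (e.1.2 == h.2)%:R).
have r0 : r%:R != 0 :> C by rewrite pnatr_eq0 -lt0n (r_gt0 prim).
rewrite [X in _ = _ * X]exchange_big /= [X in _ = _ * X](eq_bigr (fun e => r%:R * \sum_(s < r) Hf (pw s e))); last first.
  move=> e Ae; rewrite sumk; congr (_ * _); apply: eq_bigr => s _.
  by rewrite /Hf /cc (row_pw s Ae) -(col_pwS s Ae).
have ee : forall S : C, r%:R ^- 2 * (r%:R * (r%:R * S)) = S.
  by move=> S; field.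
rewrite -mulr_sumr avg ee.
apply: eq_bigr => e Ae.
rewrite /Le !dl_split !(eq_sym g.2) !(eq_sym h.2).
rewrite (_ : (g.1 == e.2.1) = (g.1 == e.1.1.+1 :> nat)); last by rewrite -(hrow Ae).
rewrite (_ : (h.1 == e.2.1) = (h.1 == e.1.1.+1 :> nat)); last by rewrite -(hrow Ae).
rewrite /Hf; ring.
Qed.

Lemma SCg_fourier : SCg (fun g h => \sum_(e | A e) Le C e.1 e.2 g h).
Proof.
have H1 : SCg (fun g h => \sum_(k < r) \sum_(e | A e) Prod (xk k e) (yk k e) g h).
  by apply: SCg_sum => k _; apply: SCg_sum => e _; exact: SCg_prod.
have H2 := SCg_scale (c := (r%:R ^+ 2)^-1) _ H1.
apply: SCg_ext (H2 _) => [g h|]; first by rewrite fourier.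
by rewrite invr_ge0 exprn_ge0 ?ler0n.
Qed.
End Fourier.
Lemma pairforce (Y Z : finType) (w : Y) (G : Y -> Z -> bool) :
  \sum_(e : Y * Z) ((e.1 == w) && G e.1 e.2 : nat) = \sum_v (G w v : nat).
Proof.
rewrite [LHS](_ : _ = \sum_i \sum_j ((i == w) && G i j : nat)); last first.
  by rewrite pair_bigA.
rewrite (bigD1 w) //= [X in _ + X]big1 ?addr0.
  by apply: eq_bigr => l _; rewrite eqxx.
by move=> i hi; rewrite big1 // => j _; rewrite (negbTE hi).
Qed.

Section Row.
Variables (C : numClosedFieldType) (a b : nat).
Local Notation T := (gridV a b).
Local Notation X := (T * T)%type.

Lemma SCg_row (adj : rel T) : simple_graph adj -> row_stratified adj ->
  degree_criterion adj -> SCg (mf (laplacian C adj)).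
Proof.
move=> [sym irr] rs dc.
pose f1 (e : X) := if Afun adj e then Some (e.1.1, e.2.2) else None.
pose f2 (e : X) := if Afun adj e then Some e.1 else None.
have fib : forall y, #|[set x | f1 x == y]| = #|[set x | f2 x == y]|.
  case=> [u|]; last first.
    by rewrite !cardS; apply: eq_bigr => e _; rewrite /f1 /f2; case: (Afun adj e).
  rewrite !cardS.
  transitivity (innS adj u); last first.
    rewrite -(balance sym rs dc u) /outS -(pairforce u (fun x y => Afun adj (x, y))).
    apply: eq_bigr => -[x y] _ /=; rewrite /f2 /=; case: (Afun adj (x, y)) => /=; last by rewrite andbF.
    by have -> : (Some x == Some u) = (x == u) by []; rewrite andbT.
  rewrite /innS.
  transitivity (\sum_(e : X) ((e.1 == u) && Afun adj ((e.1.1, e.2.2), (e.2.1, e.1.2)) : nat));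
    last exact: (pairforce u (fun x y => Afun adj ((x.1, y.2), (y.1, x.2)))).
  pose psi (e : X) : X := ((e.1.1, e.2.2), (e.2.1, e.1.2)).
  have psiK : involutive psi by case=> [[? ?] [? ?]].
  rewrite (reindex_inj (inv_inj psiK)) /=.
  apply: eq_bigr => -[[x1 x2] [y1 y2]] _ /=; rewrite /f1 /psi /=.
  case: (Afun adj _) => /=; last by rewrite andbF.
  by have -> : (Some (x1, x2) == Some u) = ((x1, x2) == u) by []; rewrite andbT.
have [pi hpi0] := perm_fiber fib.
have hA : forall e, Afun adj (pi e) = Afun adj e.
  move=> e; have := hpi0 e; rewrite /f1 /f2.
  by case: (Afun adj e); case: (Afun adj (pi e)).
have hpi : forall e, Afun adj e -> (pi e).1 = (e.1.1, e.2.2).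
  move=> e Ae; have := hpi0 e; rewrite /f1 /f2 Ae hA Ae.
  by case.
have hrow : forall e, Afun adj e -> e.2.1 = e.1.1.+1 :> nat.
  by move=> e /and3P [_ _ /eqP].
have [w prim] := prim_root_exists C (order_gt0 pi).
have HF := SCg_fourier hA hpi hrow (expg_order pi) prim.
have HN : SCg (fun g h => 2%:R^-1 *
   \sum_(e | adj e.1 e.2 && ~~ diagonal e.1 e.2) Le C e.1 e.2 g h).
  apply: SCg_scale; first by rewrite invr_ge0 ler0n.
  by apply: SCg_sum => e /andP [_ nd]; exact: SCg_Le_nondiag.
apply: SCg_ext (SCg_add HN HF) => g h.
by rewrite lap_split.
Qed.
End Row.
Section Swap.
Variables (C : numClosedFieldType) (a b : nat).
Local Notation T := (gridV a b).
Local Notation T' := (gridV b a).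

Definition sw (u : T) : T' := (u.2, u.1).
Definition swi (x : T') : T := (x.2, x.1).
Lemma swK : cancel sw swi. Proof. by case. Qed.
Lemma swiK : cancel swi sw. Proof. by case. Qed.

Variable adj : rel T.
Definition adj' : rel T' := fun x y => adj (swi x) (swi y).

Lemma sum_sw (F : T -> nat) : \sum_(x : T') F (swi x) = \sum_(u : T) F u.
Proof.
rewrite [RHS](reindex swi) //; exists sw => x _; [exact: swiK | exact: swK].
Qed.

Lemma deg_sw x : deg adj' x = deg adj (swi x).
Proof.
rewrite /deg !cardS /adj'.
exact: (sum_sw (fun v => (adj (swi x) v : nat))).
Qed.

Lemma simple_sw : simple_graph adj -> simple_graph adj'.
Proof. by move=> [sym irr]; split => [x y|x]; rewrite /adj'; [exact: sym | exact: irr]. Qed.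

Lemma strat_sw : col_stratified adj -> row_stratified adj'.
Proof.
move=> cs x y h d; apply: (cs _ _ h).
by move: d; rewrite /diagonal /swi /= andbC.
Qed.

Lemma ptrans_sw : symmetric adj -> forall x y, ptrans adj' x y = ptrans adj (swi x) (swi y).
Proof. by move=> sym [x1 x2] [y1 y2]; rewrite /ptrans /adj' /swi /= sym. Qed.

Lemma crit_sw : symmetric adj -> degree_criterion adj -> degree_criterion adj'.
Proof.
move=> sym dc x; rewrite deg_sw dc /deg !cardS.
rewrite -(sum_sw (fun v => (ptrans adj (swi x) v : nat))).
by apply: eq_bigr => y _; rewrite ptrans_sw.
Qed.

Lemma lap_sw g h : mf (laplacian C adj) g h = mf (laplacian C adj') (sw g) (sw h).
Proof.
rewrite !mf_lap deg_sw /adj' !swK.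
have -> : (sw g == sw h) = (g == h).
  by apply/eqP/eqP => [e|->]; [rewrite -(swK g) e swK|].
by [].
Qed.

Lemma SCg_sw (F : T' -> T' -> C) : SCg F -> SCg (fun g h => F (sw g) (sw h)).
Proof.
move=> [s hs]; exists [seq (q.2, q.1) | q <- s] => g h.
rewrite hs big_map; apply: eq_bigr => q _; rewrite /Prod /=; ring.
Qed.
End Swap.
Section Hand.
Variables (C : numClosedFieldType) (a b : nat).
Local Notation T := (gridV a b).
Variable adj : rel T.
Hypothesis sym : symmetric adj.
Hypothesis irr : irreflexive adj.

Definition rk (u : T) : nat := enum_rank u.
Lemma rk_inj : injective rk.
Proof. by move=> u v /val_inj /enum_rank_inj. Qed.

Definition Elt := [set e : T * T | adj e.1 e.2 && (rk e.1 < rk e.2)%N].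
Definition phi (e : T * T) : {set T} := [set e.1; e.2].

Lemma edges_phi : edges adj = phi @: Elt.
Proof.
apply/setP => S; apply/imset2P/imsetP.
  case=> x1 x2 _; rewrite inE => hx ->.
  have ne : rk x1 != rk x2.
    by apply/negP => /eqP /rk_inj e; move: hx; rewrite e irr.
  case: (ltngtP (rk x1) (rk x2)) => h.
  - by exists (x1, x2); rewrite // inE /= hx h.
  - by exists (x2, x1); [rewrite inE /= sym hx h | rewrite /phi /= setUC].
  - by move: ne; rewrite h eqxx.
case=> e; rewrite inE => /andP [h _] ->.
by exists e.1 e.2; rewrite ?inE.
Qed.

Lemma phi_inj : {in Elt &, injective phi}.
Proof.
move=> [u v] [u' v']; rewrite !inE /phi /= => /andP [_ h1] /andP [_ h2] E.
have : u \in [set u'; v'] by rewrite -E !inE eqxx.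
have : v \in [set u'; v'] by rewrite -E !inE eqxx orbT.
rewrite !inE => /orP [] /eqP ev /orP [] /eqP eu.
- by move: h1; rewrite ev eu ltnn.
- by move: h1 h2; rewrite ev eu => a1 a2; have := ltn_trans a1 a2; rewrite ltnn.
- by rewrite eu ev.
- by move: h1; rewrite ev eu ltnn.
Qed.

Lemma sum_deg : (\sum_u deg adj u = 2 * #|edges adj|)%N.
Proof.
rewrite edges_phi (card_in_imset phi_inj) cardS.
rewrite (eq_bigr (fun u => \sum_v (adj u v : nat))%N); last by move=> u _; rewrite /deg cardS.
rewrite pair_bigA /=.
rewrite (eq_bigr (fun e : T * T => ((adj e.1 e.2 && (rk e.1 < rk e.2)%N) : nat) +
   ((adj e.2 e.1 && (rk e.2 < rk e.1)%N) : nat))%N); last first.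
  move=> [u v] _ /=; rewrite (sym v u).
  case h: (adj u v) => //=.
  have ne : rk u != rk v.
    by apply/negP => /eqP /rk_inj e; move: h; rewrite e irr.
  by case: (ltngtP (rk u) (rk v)) => // e; move: ne; rewrite e eqxx.
rewrite big_split /=.
have -> : (\sum_(e : T * T) ((adj e.2 e.1 && (rk e.2 < rk e.1)%N) : nat) =
           \sum_(e : T * T) ((adj e.1 e.2 && (rk e.1 < rk e.2)%N) : nat))%N.
  pose sw (e : T * T) := (e.2, e.1).
  have swK : involutive sw by case.
  by rewrite [RHS](reindex_inj (inv_inj swK)).
rewrite mul2n -addnn; congr (_ + _)%N; apply: eq_bigr => e _; by rewrite inE.
Qed.

Lemma tr_lap : \tr (laplacian C adj) = (2 * #|edges adj|)%:R.
Proof.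
rewrite tr_mf -sum_deg natr_sum; apply: eq_bigr => u _.
by rewrite mf_lap eqxx.
Qed.
End Hand.

Theorem mainTheorem10 (C : numClosedFieldType) (a b : nat)
  (adj : rel ('I_a * 'I_b)) :
  simple_graph adj ->
  (0 < #|edges adj|)%N ->
  row_stratified adj \/ col_stratified adj ->
  (separable (rho C adj) <-> degree_criterion adj).
Proof.
move=> sg m0 strat; split; first exact: necessity.
move=> dc.
have [sym irr] := sg.
have HL : SCg (mf (laplacian C adj)).
  case: strat => [rs | cs]; first exact: SCg_row.
  have H := SCg_row C (simple_sw sg) (strat_sw cs) (crit_sw sym dc).
  by apply: SCg_ext (SCg_sw H) => g h; rewrite (lap_sw C adj g h).
set c := ((2 * #|edges adj|)%:R : C)^-1.
have c0 : ((2 * #|edges adj|)%:R : C) != 0 by rewrite pnatr_eq0 muln_eq0 /= -lt0n m0.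
apply: SCg_sep.
  apply: SCg_ext (SCg_scale (c := c) _ HL) => [g h|].
    by rewrite /rho mf_scale.
  by rewrite invr_ge0 ler0n.
by rewrite /rho mxtraceZ tr_lap // mulVf.
Qed.
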